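(* Let $A\in\mathbb{R}^{m\times n}$ with $m>n$ be a full-rank standardized matrix with no two distinct rows parallel, let $x\in\mathbb{R}^n$, and let $b=Ax$. Let $x_{k-1}$ be the $(k-1)$-st iterate of the two-subspace Kaczmarz method, and let $x_k$ be the next iterate. Then, conditionally on $x_{k-1}$, $$\mathbb{E}\|x-x_k\|_2^2\le\left(\left(1-\frac1R\right)^2-\frac DR\right)\|x-x_{k-1}\|_2^2,$$ where $D=\min\left\{\frac{\delta^2(1-\delta)}{1+\delta},\frac{\Delta^2(1-\Delta)}{1+\Delta}\right\}$.
   Context: $A\in\mathbb{R}^{m\times n}$ has rows $a_1,\dots,a_m$. It is called standardized if $\|a_i\|_2=1$ for all $i$. ''No two distinct rows parallel'' means $|\langle a_r,a_s\rangle|<1$ for all $r\ne s$. Two-subspace Kaczmarz method for $(A,b)$, $b\in\mathbb{R}^m$: start from $x_0\in\mathbb{R}^n$. For $k=1,2,\dots$, choose an ordered pair $(r,s)$ of distinct indices in $\{1,\dots,m\}$ uniformly at random among the $m^2-m$ such pairs, independently of all previous choices. Then set $\mu_k=\langle a_r,a_s\rangle$, $y_k=x_{k-1}+(b_s-\langle x_{k-1},a_s\rangle)a_s$, $v_k=\frac{a_r-\mu_k a_s}{\sqrt{1-\mu_k^2}}$, $\beta_k=\frac{b_r-b_s\mu_k}{\sqrt{1-\mu_k^2}}$, and $x_k=y_k+(\beta_k-\langle y_k,v_k\rangle)v_k$. Coherence parameters: $\Delta=\max_{j\ne k}|\langle a_j,a_k\rangle|$ and $\delta=\min_{j\ne k}|\langle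 a_j,a_k\rangle|$. Scaled condition number: $R=\|A\|_F^2\|A^{-1}\|^2$, where $\|A^{-1}\|=\inf\{M: M\|Az\|_2\ge\|z\|_2\ \text{for all } z\}$, i.e. the reciprocal of the smallest singular value of $A$. *)

(* Defs.v *)
From HB Require Import structures.
From mathcomp Require Import all_boot all_order all_algebra.
Set Implicit Arguments. Unset Strict Implicit. Unset Printing Implicit Defensive.
Import Order.TTheory GRing.Theory Num.Theory.
Local Open Scope ring_scope.

Section Defs.
Variable F : rcfType.

Definition dot n (u v : 'rV[F]_n) : F := \sum_(i < n) u 0 i * v 0 i.
Definition norm2 n (u : 'rV[F]_n) : F := dot u u.
Definition norm n (u : 'rV[F]_n) : F := Num.sqrt (norm2 u).

Definition frob2 m n (A : 'M[F]_(m, n)) : F := \sum_(i < m) \sum_(j < n) A i j ^+ 2.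

Definition standardized m n (A : 'M[F]_(m, n)) : Prop :=
  forall i : 'I_m, norm (row i A) = 1.

Definition no_parallel_rows m n (A : 'M[F]_(m, n)) : Prop :=
  forall r s : 'I_m, r != s -> `|dot (row r A) (row s A)| < 1.

(* M is the infimum of { M : M ||Az|| >= ||z|| for all z }, i.e. M = ||A^{-1}|| *)
Definition inv_norm_admissible m n (A : 'M[F]_(m, n)) (M : F) : Prop :=
  forall z : 'rV[F]_n, M * norm (z *m A^T) >= norm z.
Definition is_inv_norm m n (A : 'M[F]_(m, n)) (M : F) : Prop :=
  (forall M', inv_norm_admissible A M' -> M <= M') /\
  (forall L, (forall M', inv_norm_admissible A M' -> L <= M') -> L <= M).

Definition scaled_cond m n (A : 'M[F]_(m, n)) (Minv : F) : F := frob2 A * Minv ^+ 2.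

(* The neutral elements 0 (for max) and 1 (for min) do not affect the value
   as soon as there is at least one pair and all |<a_j,a_k>| lie in [0,1). *)
Definition coh_max m n (A : 'M[F]_(m, n)) : F :=
  \big[Num.max/0]_(j < m) \big[Num.max/0]_(k < m | k != j) `|dot (row j A) (row k A)|.
Definition coh_min m n (A : 'M[F]_(m, n)) : F :=
  \big[Num.min/1]_(j < m) \big[Num.min/1]_(k < m | k != j) `|dot (row j A) (row k A)|.

Definition tsk_step m n (A : 'M[F]_(m, n)) (b : 'cV[F]_m) (y : 'rV[F]_n)
    (r s : 'I_m) : 'rV[F]_n :=
  let ar := row r A in
  let as_ := row s A in
  let mu := dot ar as_ in
  let yk := y + (b s 0 - dot y as_) *: as_ in
  let vk := (Num.sqrt (1 - mu ^+ 2))^-1 *: (ar - mu *: as_) in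
  let betak := (b r 0 - b s 0 * mu) / Num.sqrt (1 - mu ^+ 2) in
  yk + (betak - dot yk vk) *: vk.

(* conditional expectation of ||x - x_k||^2 given x_{k-1} = y: the ordered pair
   (r,s), r<>s, is uniform among the m^2 - m pairs and independent of the past *)
Definition tsk_expected_err m n (A : 'M[F]_(m, n)) (b : 'cV[F]_m)
    (x y : 'rV[F]_n) : F :=
  (m%:R ^+ 2 - m%:R)^-1 *
  \sum_(r < m) \sum_(s < m | s != r) norm2 (x - tsk_step A b y r s).

End Defs.

(* Main.v *)
Require Import Defs.
From HB Require Import structures.
From mathcomp Require Import all_boot all_order all_algebra.
From mathcomp Require Import ring lra.
Import Order.TTheory GRing.Theory Num.Theory.
Set Implicit Arguments. Unset Strict Implicit.
Local Open Scope ring_scope.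

Lemma dotC (F : rcfType) n (u v : 'rV[F]_n) : dot u v = dot v u.
Proof. by apply: eq_bigr => i _; rewrite mulrC. Qed.
Lemma dotDl (F : rcfType) n (u v w : 'rV[F]_n) : dot (u + v) w = dot u w + dot v w.
Proof. by rewrite /dot -big_split; apply: eq_bigr => i _; rewrite mxE mulrDl. Qed.
Lemma dotNl (F : rcfType) n (u w : 'rV[F]_n) : dot (- u) w = - dot u w.
Proof. by rewrite /dot -sumrN; apply: eq_bigr => i _; rewrite mxE mulNr. Qed.
Lemma dotZl (F : rcfType) n a (u w : 'rV[F]_n) : dot (a *: u) w = a * dot u w.
Proof. by rewrite /dot mulr_sumr; apply: eq_bigr => i _; rewrite mxE mulrA. Qed.
Lemma dotBl (F : rcfType) n (u v w : 'rV[F]_n) : dot (u - v) w = dot u w - dot v w.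
Proof. by rewrite dotDl dotNl. Qed.
Lemma dotDr (F : rcfType) n (u v w : 'rV[F]_n) : dot w (u + v) = dot w u + dot w v.
Proof. by rewrite dotC dotDl !(dotC w). Qed.
Lemma dotBr (F : rcfType) n (u v w : 'rV[F]_n) : dot w (u - v) = dot w u - dot w v.
Proof. by rewrite dotC dotBl !(dotC w). Qed.
Lemma dotZr (F : rcfType) n a (u w : 'rV[F]_n) : dot w (a *: u) = a * dot w u.
Proof. by rewrite dotC dotZl dotC. Qed.
Lemma norm2_ge0 (F : rcfType) n (u : 'rV[F]_n) : 0 <= norm2 u.
Proof. by apply: sumr_ge0 => i _; rewrite -expr2 sqr_ge0. Qed.

Lemma std_norm2 (F : rcfType) m n (A : 'M[F]_(m,n)) i :
  standardized A -> norm2 (row i A) = 1.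
Proof.
move=> /(_ i); rewrite /norm => h.
by rewrite -(sqr_sqrtr (norm2_ge0 (row i A))) h expr1n.
Qed.

Lemma bE (F : rcfType) m n (A : 'M[F]_(m,n)) (x : 'rV[F]_n) i :
  (A *m x^T) i 0 = dot x (row i A).
Proof. by rewrite !mxE /dot; apply: eq_bigr => j _; rewrite !mxE mulrC. Qed.

Lemma norm2_comb (F : rcfType) n (e u v : 'rV[F]_n) al be :
  norm2 u = 1 -> norm2 v = 1 ->
  norm2 (e + al *: u + be *: v) = norm2 e + al ^+ 2 + be ^+ 2 + 2 * al * dot e u
    + 2 * be * dot e v + 2 * al * be * dot u v.
Proof.
rewrite /norm2 => hu hv.
rewrite !(dotDl, dotDr, dotZl, dotZr) hu hv (dotC u e) (dotC v e) (dotC v u).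
ring.
Qed.

Lemma step_err (F : rcfType) m n (A : 'M[F]_(m,n)) (x xp : 'rV[F]_n) r s :
  standardized A -> `|dot (row r A) (row s A)| < 1 ->
  norm2 (x - tsk_step A (A *m x^T) xp r s) =
  norm2 (x - xp) - dot (x - xp) (row s A) ^+ 2
  - (dot (x - xp) (row r A) - dot (row r A) (row s A) * dot (x - xp) (row s A)) ^+ 2
    / (1 - dot (row r A) (row s A) ^+ 2).
Proof.
move=> hA hmu.
rewrite /tsk_step.
set ar := row r A; set as_ := row s A; set mu := dot ar as_.
have h1 : 0 < 1 - mu ^+ 2.
  rewrite subr_gt0 -real_normK ?num_real //.
  by rewrite expr_lt1 // normr_ge0.
set q := Num.sqrt (1 - mu ^+ 2).
have hq2 : q ^+ 2 = 1 - mu ^+ 2 by rewrite sqr_sqrtr // ltW.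
have hq0 : q != 0 by rewrite gt_eqF // sqrtr_gt0.
set ga := (A *m x^T) s 0 - dot xp as_.
set ka := (_ - dot _ _).
have has : dot as_ as_ = 1 by exact: (std_norm2 s hA).
have dotNr' : forall (u w : 'rV[F]_n), dot w (- u) = - dot w u.
  by move=> u w; rewrite dotC dotNl dotC.
have hga : ga = dot (x - xp) as_ by rewrite /ga bE dotBl.
have hka : ka * q^-1 = (dot (x - xp) ar - mu * dot (x - xp) as_) / (1 - mu ^+ 2).
  rewrite /ka hga !bE -/ar -/as_.
  rewrite !(dotDl, dotDr, dotZl, dotZr, dotBl, dotBr, dotNl, dotNr') has (dotC as_ ar) -/mu.
  rewrite -hq2. clearbody q mu.
  move: (dot x ar) (dot x as_) (dot xp ar) (dot xp as_) => a1 a2 a3 a4.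
  field. exact: hq0.
have -> : x - (xp + ga *: as_ + ka *: (q^-1 *: (ar - mu *: as_))) =
   (x - xp) + (- ga + ka * q^-1 * mu) *: as_ + (- (ka * q^-1)) *: ar.
  by apply/rowP => j; rewrite !mxE; ring.
rewrite norm2_comb ?std_norm2 // hka hga (dotC as_ ar) -/mu.
field. by rewrite gt_eqF.
Qed.

Lemma inv_norm_bound (F : rcfType) m n (A : 'M[F]_(m,n)) Minv (z : 'rV[F]_n) :
  is_inv_norm A Minv -> norm2 z <= Minv ^+ 2 * norm2 (z *m A^T).
Proof.
move=> [h1 h2].
have ha : 0 <= norm z by rewrite /norm sqrtr_ge0.
have hb : 0 <= norm (z *m A^T) by rewrite /norm sqrtr_ge0.
have key : norm z <= Minv * norm (z *m A^T).
  have [bpos|] := ltrP 0 (norm (z *m A^T)).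
    have : norm z / norm (z *m A^T) <= Minv.
      apply: h2 => M' hM'; move: (hM' z).
      by rewrite ler_pdivrMr // mulrC.
    by rewrite ler_pdivrMr // mulrC.
  move=> ble; have b0 : norm (z *m A^T) = 0 by apply/eqP; rewrite eq_le ble hb.
  rewrite b0 mulr0.
  case: (ltrP 0 (norm z)) => // apos.
  have : Minv + 1 <= Minv.
    apply: h2 => M' hM'; move: (hM' z); rewrite b0 mulr0 => hh.
    by move: (lt_le_trans apos hh); rewrite ltxx.
  by move=> hh; exfalso; move: hh; rewrite gerDl ler10.
have e1 : norm2 z = norm z ^+ 2 by rewrite /norm sqr_sqrtr // norm2_ge0.
have e2 : norm2 (z *m A^T) = norm (z *m A^T) ^+ 2 by rewrite /norm sqr_sqrtr // norm2_ge0.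
rewrite e1 e2 -exprMn.
apply: lerXn2r => //; rewrite ?nnegrE //.
exact: (le_trans ha key).
Qed.

Lemma norm2_mulT (F : rcfType) m n (A : 'M[F]_(m,n)) (z : 'rV[F]_n) :
  norm2 (z *m A^T) = \sum_(i < m) dot z (row i A) ^+ 2.
Proof.
apply: eq_bigr => i _; rewrite expr2; congr (_ * _);
  by rewrite !mxE; apply: eq_bigr => j _; rewrite !mxE.
Qed.

Definition fD (F : rcfType) (t : F) := t ^+ 2 * (1 - t) / (1 + t).

Lemma fD_le_iff (F : rcfType) (a t : F) : 0 <= a -> 0 <= t ->
  a ^+ 2 * (1 - a) * (1 + t) <= t ^+ 2 * (1 - t) * (1 + a) -> fD a <= fD t.
Proof.
move=> ha ht h; rewrite /fD ler_pdivrMr ?ltr_wpDr //.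
have -> : t ^+ 2 * (1 - t) / (1 + t) * (1 + a) = t ^+ 2 * (1 - t) * (1 + a) / (1 + t).
  by rewrite mulrAC.
by rewrite ler_pdivlMr ?ltr_wpDr.
Qed.

Lemma fD_min (F : rcfType) (a t b : F) : 0 <= a -> a <= t -> t <= b ->
  Num.min (fD a) (fD b) <= fD t.
Proof.
move=> ha hat htb.
have ht : 0 <= t by exact: le_trans hat.
have hb : 0 <= b by exact: le_trans htb.
case: (lerP (t ^+ 2 + t) 1) => hg.
- rewrite ge_min; apply/orP; left; apply: fD_le_iff => //.
  rewrite -subr_ge0.
  set d := t - a; set g := 1 - t - t ^+ 2.
  have hd : 0 <= d by rewrite subr_ge0.
  have hg' : 0 <= g by rewrite /g; lra.
  have -> : t ^+ 2 * (1 - t) * (1 + a) - a ^+ 2 * (1 - a) * (1 + t) =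
     d * (t * g + t * t * d + a * g + a * d + a * t * d) by rewrite /d /g; ring.
  by rewrite mulr_ge0 // !addr_ge0 // !mulr_ge0.
- rewrite ge_min; apply/orP; right; apply: fD_le_iff => //.
  rewrite -subr_ge0.
  set d := b - t; set g := t + t ^+ 2 - 1.
  have hd : 0 <= d by rewrite subr_ge0.
  have hg' : 0 <= g by rewrite /g; lra.
  have -> : t ^+ 2 * (1 - t) * (1 + b) - b ^+ 2 * (1 - b) * (1 + t) =
     d * (b * g + b * d + b * t * d + t * g + t * t * d) by rewrite /d /g; ring.
  by rewrite mulr_ge0 // !addr_ge0 // !mulr_ge0.
Qed.

Lemma pair_gain (F : rcfType) (mu cr cs a b : F) :
  0 <= a -> a <= `|mu| -> `|mu| <= b -> `|mu| < 1 ->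
  Num.min (fD a) (fD b) * (cr ^+ 2 + cs ^+ 2) <=
  (cr - mu * cs) ^+ 2 * mu ^+ 2 / (1 - mu ^+ 2) + (cs - mu * cr) ^+ 2 * mu ^+ 2 / (1 - mu ^+ 2).
Proof.
move=> ha hat htb ht1.
set t := `|mu| in hat htb ht1.
have ht : 0 <= t by rewrite normr_ge0.
have hS : 0 <= cr ^+ 2 + cs ^+ 2 by rewrite addr_ge0 ?sqr_ge0.
apply: (le_trans (ler_wpM2r hS (fD_min ha hat htb))).
have hmu : mu ^+ 2 = t ^+ 2 by rewrite /t real_normK ?num_real.
have h1t : 0 < 1 - t by rewrite subr_gt0.
have h1t' : 0 < 1 + t by rewrite ltr_wpDr.
have hq : 1 - mu ^+ 2 = (1 - t) * (1 + t) by rewrite hmu; ring.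
have -> : fD t * (cr ^+ 2 + cs ^+ 2) =
   mu ^+ 2 * ((1 - t) ^+ 2 * (cr ^+ 2 + cs ^+ 2)) / (1 - mu ^+ 2).
  rewrite hq /fD hmu; field.
  by rewrite !gt_eqF.
have -> : (cr - mu * cs) ^+ 2 * mu ^+ 2 / (1 - mu ^+ 2) + (cs - mu * cr) ^+ 2 * mu ^+ 2 / (1 - mu ^+ 2)
  = mu ^+ 2 * ((cr - mu * cs) ^+ 2 + (cs - mu * cr) ^+ 2) / (1 - mu ^+ 2) by ring.
have hq0 : 0 <= (1 - mu ^+ 2)^-1 by rewrite invr_ge0 hq ltW // mulr_gt0.
apply: (ler_wpM2r hq0); apply: ler_wpM2l; first by rewrite sqr_ge0.
rewrite -subr_ge0.
case: (lerP 0 mu) => hm.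
- have e : t = mu by rewrite /t ger0_norm.
  have -> : (cr - mu * cs) ^+ 2 + (cs - mu * cr) ^+ 2 - (1 - t) ^+ 2 * (cr ^+ 2 + cs ^+ 2)
     = 2 * mu * (cr - cs) ^+ 2 by rewrite e; ring.
  by apply: mulr_ge0; [apply: mulr_ge0 => //; apply: ler0n | apply: sqr_ge0].
- have e : t = - mu by rewrite /t ltr0_norm.
  have -> : (cr - mu * cs) ^+ 2 + (cs - mu * cr) ^+ 2 - (1 - t) ^+ 2 * (cr ^+ 2 + cs ^+ 2)
     = 2 * t * (cr + cs) ^+ 2 by rewrite e; ring.
  by apply: mulr_ge0; [apply: mulr_ge0 => //; apply: ler0n | apply: sqr_ge0].
Qed.

Lemma final_arith (F : rcfType) (mm E S2 W G k D L : F) :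
  2 <= mm -> 0 <= E -> 0 <= D -> 0 <= S2 -> 0 <= W -> 0 <= k ->
  S2 <= mm * E -> E <= k * S2 -> mm * E - S2 <= k * W -> D * (mm - 1) * S2 <= G ->
  L <= mm * (mm - 1) * E - (mm - 1) * S2 - W - G ->
  (mm ^+ 2 - mm)^-1 * L <= ((1 - (mm * k)^-1) ^+ 2 - D / (mm * k)) * E.
Proof.
move=> hm hE hD hS hW hk hSE hES hW' hG hL.
have hmm : 0 < mm ^+ 2 - mm by nra.
have [k0|kpos] := eqVneq k 0.
  have E0 : E = 0 by apply/eqP; rewrite eq_le hE andbT; move: hES; rewrite k0 mul0r.
  have S0 : S2 = 0 by apply/eqP; rewrite eq_le hS andbT; move: hSE; rewrite E0 mulr0.
  rewrite E0 mulr0; rewrite pmulr_rle0 ?invr_gt0 //.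
  move: hG hL; rewrite E0 S0 !mulr0; lra.
have kp : 0 < k by rewrite lt_def kpos hk.
have hpoly : L * (mm * k ^+ 2) <= (mm - 1) * ((mm * k - 1) ^+ 2 - D * mm * k) * E.
  have hkS : k * S2 <= k * (mm * E) by apply: ler_wpM2l.
  have hmk : 0 <= E * (mm * k - 1).
    have -> : E * (mm * k - 1) = k * (mm * E) - E by ring.
    by rewrite subr_ge0 (le_trans hES hkS).
  have mk0 : 0 <= mm * k by apply: mulr_ge0 => //; lra.
  have mk20 : 0 <= mm * k ^+ 2 by apply: mulr_ge0; [lra | apply: sqr_ge0].
  have hD1 : 0 <= D * (mm - 1) * (mm * k) by apply: mulr_ge0 => //; apply: mulr_ge0 => //; lra.
  have s1 : 0 <= (k * W) * (mm * k) - (mm * E - S2) * (mm * k).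
    by rewrite subr_ge0; apply: ler_wpM2r.
  have s3 : 0 <= (mm * (mm - 1) * E - (mm - 1) * S2 - W - G) * (mm * k ^+ 2) - L * (mm * k ^+ 2).
    by rewrite subr_ge0; apply: ler_wpM2r.
  have sA : 0 <= G * (mm * k ^+ 2) - D * (mm - 1) * S2 * (mm * k ^+ 2).
    by rewrite subr_ge0; apply: ler_wpM2r.
  have sB : 0 <= D * (mm - 1) * (mm * k) * (k * S2) - D * (mm - 1) * (mm * k) * E.
    by rewrite subr_ge0; apply: ler_wpM2l.
  rewrite -subr_ge0 -(pmulr_rge0 _ kp).
  case: (lerP ((mm - 1) * k) 1) => hc.
  - have r1 : 0 <= k * ((mm * E - S2) * (mm * k * (1 - (mm - 1) * k))).
      apply: mulr_ge0 => //; apply: mulr_ge0; first lra.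
      by apply: mulr_ge0 => //; lra.
    have r2 : 0 <= k * ((mm - 1) * E * (mm * k - 1) ^+ 2).
      apply: mulr_ge0 => //; apply: mulr_ge0; [apply: mulr_ge0 => //; lra | apply: sqr_ge0].
    have -> : k * ((mm - 1) * ((mm * k - 1) ^+ 2 - D * mm * k) * E - L * (mm * k ^+ 2)) =
      k * ((mm * (mm - 1) * E - (mm - 1) * S2 - W - G) * (mm * k ^+ 2) - L * (mm * k ^+ 2))
      + k * ((k * W) * (mm * k) - (mm * E - S2) * (mm * k))
      + k * (G * (mm * k ^+ 2) - D * (mm - 1) * S2 * (mm * k ^+ 2))
      + k * (D * (mm - 1) * (mm * k) * (k * S2) - D * (mm - 1) * (mm * k) * E)
      + k * ((mm * E - S2) * (mm * k * (1 - (mm - 1) * k)))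
      + k * ((mm - 1) * E * (mm * k - 1) ^+ 2) by ring.
    by rewrite !addr_ge0 // mulr_ge0.
  - have r1 : 0 <= (k * S2 - E) * (mm * k * ((mm - 1) * k - 1)).
      apply: mulr_ge0; first lra.
      by apply: mulr_ge0 => //; lra.
    have r2 : 0 <= k * (E * (mm * k - 1)) by apply: mulr_ge0.
    have -> : k * ((mm - 1) * ((mm * k - 1) ^+ 2 - D * mm * k) * E - L * (mm * k ^+ 2)) =
      k * ((mm * (mm - 1) * E - (mm - 1) * S2 - W - G) * (mm * k ^+ 2) - L * (mm * k ^+ 2))
      + k * ((k * W) * (mm * k) - (mm * E - S2) * (mm * k))
      + k * (G * (mm * k ^+ 2) - D * (mm - 1) * S2 * (mm * k ^+ 2))
      + k * (D * (mm - 1) * (mm * k) * (k * S2) - D * (mm - 1) * (mm * k) * E)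
      + (k * S2 - E) * (mm * k * ((mm - 1) * k - 1))
      + k * (E * (mm * k - 1)) by ring.
    by rewrite !addr_ge0 // mulr_ge0.
have e1 : (mm ^+ 2 - mm)^-1 * L = L * (mm * k ^+ 2) / (mm * k ^+ 2 * (mm ^+ 2 - mm)).
  field; rewrite kpos gt_eqF //= gt_eqF //; lra.
have e2 : ((1 - (mm * k)^-1) ^+ 2 - D / (mm * k)) * E =
     (mm - 1) * ((mm * k - 1) ^+ 2 - D * mm * k) * E / (mm * k ^+ 2 * (mm ^+ 2 - mm)).
  field; rewrite kpos gt_eqF //= ?gt_eqF //; lra.
rewrite e1 e2; apply: ler_wpM2r => //.
by rewrite invr_ge0 ltW // !mulr_gt0 // ?exprn_gt0 //; nra.
Qed.

Lemma coh_min_le (F : rcfType) m n (A : 'M[F]_(m,n)) (r s : 'I_m) :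
  r != s -> coh_min A <= `|dot (row r A) (row s A)|.
Proof.
move=> h; rewrite /coh_min.
have H := bigmin_le (1:F) r (fun j => \big[Num.min/1]_(k < m | k != j) `|dot (row j A) (row k A)|).
apply: le_trans H _; apply: bigmin_le_cond; by rewrite eq_sym.
Qed.

Lemma coh_max_ge (F : rcfType) m n (A : 'M[F]_(m,n)) (r s : 'I_m) :
  r != s -> `|dot (row r A) (row s A)| <= coh_max A.
Proof.
move=> h; rewrite /coh_max.
have H := le_bigmax (0:F) (fun j => \big[Num.max/0]_(k < m | k != j) `|dot (row j A) (row k A)|) r.
apply: le_trans H; apply: (le_bigmax_cond _ (fun k => `|dot (row r A) (row k A)|)); by rewrite eq_sym.
Qed.

Lemma coh_min_ge0 (F : rcfType) m n (A : 'M[F]_(m,n)) : 0 <= coh_min A.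
Proof.
rewrite /coh_min; apply: le_bigmin => // i _; apply: le_bigmin => // j _.
Qed.

Lemma coh_min_le1 (F : rcfType) m n (A : 'M[F]_(m,n)) : coh_min A <= 1.
Proof. exact: bigmin_le_id. Qed.

Lemma coh_max_ge0 (F : rcfType) m n (A : 'M[F]_(m,n)) : 0 <= coh_max A.
Proof. exact: bigmax_ge_id. Qed.

Lemma coh_max_le1 (F : rcfType) m n (A : 'M[F]_(m,n)) :
  no_parallel_rows A -> coh_max A <= 1.
Proof.
move=> hnp; rewrite /coh_max; apply: bigmax_le => // i _; apply: bigmax_le => // j hj.
by apply: ltW; apply: hnp; rewrite eq_sym.
Qed.

Lemma fD_ge0 (F : rcfType) (t : F) : 0 <= t -> t <= 1 -> 0 <= fD t.
Proof.
move=> h0 h1; rewrite /fD; apply: mulr_ge0; last by rewrite invr_ge0; lra.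
by apply: mulr_ge0; [apply: sqr_ge0 | lra].
Qed.

Lemma sum_neq (F : rcfType) m (r : 'I_m) (f : 'I_m -> F) :
  \sum_(s < m | s != r) f s = \sum_(s < m) f s - f r.
Proof. by rewrite [X in _ = X - _](bigD1 r) //= addrC addrK. Qed.

Lemma exch_neq (F : rcfType) m (f : 'I_m -> 'I_m -> F) :
  \sum_(r < m) \sum_(s < m | s != r) f r s = \sum_(s < m) \sum_(r < m | r != s) f r s.
Proof.
under eq_bigr => r _ do rewrite sum_neq.
under [RHS]eq_bigr => s _ do rewrite sum_neq.
by rewrite !sumrB exchange_big.
Qed.

Lemma norm2_proj (F : rcfType) n (e u : 'rV[F]_n) :
  norm2 u = 1 -> norm2 (e - dot e u *: u) = norm2 e - dot e u ^+ 2.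
Proof.
rewrite /norm2 => hu.
have dotNr' : forall (a w : 'rV[F]_n), dot w (- a) = - dot w a.
  by move=> a w; rewrite dotC dotNl dotC.
rewrite !(dotDl, dotDr, dotZl, dotZr, dotNl, dotNr') hu (dotC u e); ring.
Qed.
Unset Implicit Arguments.

Theorem lemma3 (F : rcfType) (m n : nat) (A : 'M[F]_(m, n))
    (x : 'rV[F]_n) (b : 'cV[F]_m) (Minv : F) (xprev : 'rV[F]_n) :
  (n < m)%N ->
  \rank A = n ->
  standardized A ->
  no_parallel_rows A ->
  b = A *m x^T ->
  is_inv_norm A Minv ->
  let Rc := scaled_cond A Minv in
  let dl := coh_min A in
  let Dl := coh_max A in
  let D := Num.min (dl ^+ 2 * (1 - dl) / (1 + dl)) (Dl ^+ 2 * (1 - Dl) / (1 + Dl)) in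
  tsk_expected_err A b x xprev <= ((1 - Rc^-1) ^+ 2 - D / Rc) * norm2 (x - xprev).
Proof.
move=> hnm _ hstd hnp -> hinv; cbv zeta.
have n0 : (0 < n)%N.
  case: n A x xprev hnm hstd hnp hinv => // A x xprev hnm hstd.
  have := std_norm2 (Ordinal hnm) hstd.
  by rewrite /norm2 /dot big_ord0 => /eqP; rewrite eq_sym oner_eq0.
have m2 : (2 <= m)%N by apply: leq_trans hnm.
have hfrob : frob2 A = m%:R.
  rewrite /frob2 (eq_bigr (fun=> 1)); first by rewrite sumr_const card_ord.
  move=> i _; rewrite -(std_norm2 i hstd); apply: eq_bigr => j _.
  by rewrite !mxE expr2.
rewrite /scaled_cond hfrob /tsk_expected_err.
set e := x - xprev.
set E := norm2 e.
pose c (i : 'I_m) := dot e (row i A).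
pose mu (r s : 'I_m) := dot (row r A) (row s A).
pose wsq (r s : 'I_m) := (c r - mu r s * c s) ^+ 2.
pose g (r s : 'I_m) := wsq r s * mu r s ^+ 2 / (1 - mu r s ^+ 2).
have hmu1 : forall r s, r != s -> 0 < 1 - mu r s ^+ 2.
  move=> r s hrs; rewrite subr_gt0 -real_normK ?num_real //.
  by rewrite expr_lt1 ?normr_ge0 //; apply: hnp.
have hstep : forall r s, s != r ->
    norm2 (x - tsk_step A (A *m x^T) xprev r s) = E - c s ^+ 2 - wsq r s - g r s.
  move=> r s hsr; rewrite eq_sym in hsr.
  rewrite step_err //; last exact: hnp.
  rewrite -/e -/E -/(c s) -/(c r) -/(mu r s) -/(wsq r s) /g.
  have := hmu1 _ _ hsr; rewrite /mu => hh. field. by rewrite gt_eqF.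
under eq_bigr => r _ do under eq_bigr => s hs do rewrite hstep //.
set S2 := \sum_(i < m) c i ^+ 2.
set W := \sum_(r < m) \sum_(s < m | s != r) wsq r s.
set G := \sum_(r < m) \sum_(s < m | s != r) g r s.
have hE : 0 <= E by exact: norm2_ge0.
have hcE : forall i, c i ^+ 2 <= E.
  move=> i; rewrite -subr_ge0 -norm2_proj ?std_norm2 //; exact: norm2_ge0.
have hsumE : forall f : 'I_m -> F, \sum_(i < m) (E - f i) = m%:R * E - \sum_(i < m) f i.
  by move=> f; rewrite sumrB sumr_const card_ord mulr_natl.
apply: (@final_arith F m%:R E S2 W G (Minv ^+ 2) (Num.min (fD (coh_min A)) (fD (coh_max A)))).
- by rewrite (ler_nat F 2 m).
- exact: hE.
- rewrite le_min; apply/andP; split; apply: fD_ge0;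
    auto using coh_min_ge0, coh_min_le1, coh_max_ge0, coh_max_le1.
- by apply: sumr_ge0 => i _; apply: sqr_ge0.
- by apply: sumr_ge0 => i _; apply: sumr_ge0 => j _; apply: sqr_ge0.
- exact: sqr_ge0.
- rewrite -subr_ge0 -hsumE; apply: sumr_ge0 => i _; rewrite subr_ge0; exact: hcE.
- by rewrite /S2 -norm2_mulT; apply: inv_norm_bound.
- have hW : W = \sum_(s < m) norm2 ((e - c s *: row s A) *m A^T).
    rewrite /W exch_neq; apply: eq_bigr => s _.
    rewrite norm2_mulT [RHS](bigD1 s) //=.
    have has : dot (row s A) (row s A) = 1 by exact: (std_norm2 s hstd).
    rewrite dotBl dotZl has /c mulr1 subrr expr0n /= add0r.
    apply: eq_bigr => r _; rewrite /wsq dotBl dotZl /c /mu (dotC (row s A)).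
    by rewrite mulrC.
  have hS2 : m%:R * E - S2 = \sum_(s < m) (E - c s ^+ 2) by rewrite hsumE.
  rewrite hW hS2 (mulr_sumr _ _ _ (Minv ^+ 2)) ; apply: ler_sum => s _.
  rewrite -norm2_proj ?std_norm2 //; exact: inv_norm_bound.
- set Dm := Num.min _ _.
  have hG' : G = \sum_(r < m) \sum_(s < m | s != r) g s r by rewrite /G exch_neq.
  have hpair : forall r s, s != r -> Dm * (c r ^+ 2 + c s ^+ 2) <= g r s + g s r.
    move=> r s hsr; rewrite eq_sym in hsr.
    have hm : mu s r = mu r s by rewrite /mu dotC.
    rewrite /g /wsq hm.
    apply: pair_gain.
    + exact: coh_min_ge0.
    + exact: coh_min_le.
    + exact: coh_max_ge.
    + exact: hnp.
  have hcount : \sum_(r < m) \sum_(s < m | s != r) (c r ^+ 2 + c s ^+ 2)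
      = 2 * (m%:R - 1) * S2.
    rewrite (eq_bigr (fun r => (m%:R - 2) * c r ^+ 2 + S2)); last first.
      move=> r _; rewrite sum_neq big_split /= sumr_const card_ord /S2; ring.
    rewrite big_split /= -mulr_sumr sumr_const card_ord /S2; ring.
  have h2 : Dm * (2 * (m%:R - 1) * S2) <= G + G.
    rewrite -hcount mulr_sumr {2}hG' -big_split /=; apply: ler_sum => r _.
    rewrite mulr_sumr -big_split /=; apply: ler_sum => s hs; exact: hpair.
  rewrite -(ler_pM2l (_ : 0 < 2)) //.
  have -> : 2 * (Dm * (m%:R - 1) * S2) = Dm * (2 * (m%:R - 1) * S2) by ring.
  by have -> : 2 * G = G + G by ring.
- rewrite le_eqVlt; apply/orP; left; apply/eqP.
  have hc : forall a : F, \sum_(i < m) a = m%:R * a.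
    by move=> a; rewrite sumr_const card_ord mulr_natl.
  under eq_bigr => r _ do rewrite !sumrB.
  rewrite !sumrB -/W -/G.
  under eq_bigr => r _ do rewrite sum_neq hc.
  under [X in _ - X - _ - _]eq_bigr => r _ do rewrite sum_neq.
  rewrite !sumrB !hc /S2; ring.
Qed.
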